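(* Let $X\subseteq\mathbb{R}^n$ be r.e. open and let $f:X\to\mathbb{R}^m$ be computable and open. If the restriction of $\mathrm{Moo}_f$ to $(X\cap\mathbb{Q}^n)\times\mathbb{N}$ is $(\nu^n\times\nu\to\rho_<)$-computable, then $f$ is effectively open.
   Context: $\mathrm{Moo}_f(\vec x,k):=\sup\{s\ge0:\overline{B}(f(\vec x),s)\subseteq f[B(\vec x,2^{-k})\cap X]\}$, with $B,\overline{B}$ the open and closed Euclidean balls. Type-2 computability (Weihrauch): $\nu$ is the standard notation of $\mathbb{N}$ and $\nu^n$ the induced notation of rational vectors; $\rho_<$ represents a real by a sequence of rationals converging to it from below; $\theta^d_<$ represents open subsets of $\mathbb{R}^d$ by lists of rational centers and radii of open balls with union the set. $X$ r.e. open: has a computable $\theta^n_<$-name. $f$ effectively open: $U\mapsto f[U]$ on open $U\subseteq X$ is $(\theta^n_<\to\theta^m_<)$-computable. *)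

(* Defs.v *)
From HB Require Import structures.
From mathcomp Require Import all_boot all_order all_algebra.
From mathcomp Require Import all_classical all_reals.
From mathcomp Require Import ereal Rstruct.
From Stdlib Require Rdefinitions.
Notation R := Rdefinitions.R.

Set Implicit Arguments. Unset Strict Implicit. Unset Printing Implicit Defensive.
Import Order.TTheory GRing.Theory Num.Theory.
Local Open Scope ring_scope.
Local Open Scope classical_set_scope.

Definition npair (x y : nat) : nat := ((x + y) * (x + y).+1)./2 + y.

(* enumeration of nat*nat along diagonals; inverse of npair *)
Fixpoint nunpair (c : nat) : nat * nat :=
  match c with
  | 0 => (0, 0)
  | c'.+1 => match nunpair c' with
             | (0, y) => (y.+1, 0)
             | (x'.+1, y) => (x', y.+1)
             end
  end.

(* Partial recursive functions relative to an oracle p : nat -> nat.  *)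
(* (Kleene basis with pairing; with the oracle this gives exactly the *)
(* Type-2 computable functions on Baire space, total-output case.)    *)
Inductive prog : Type :=
| PZero | PSucc | PId | PFst | PSnd | POracle
| PPair of prog & prog
| PComp of prog & prog
| PRec of prog & prog
| PMu of prog.

Inductive eval (p : nat -> nat) : prog -> nat -> nat -> Prop :=
| eZero x : eval p PZero x 0
| eSucc x : eval p PSucc x x.+1
| eId x : eval p PId x x
| eFst x : eval p PFst x (nunpair x).1
| eSnd x : eval p PSnd x (nunpair x).2
| eOracle x : eval p POracle x (p x)
| ePair f g x a b : eval p f x a -> eval p g x b -> eval p (PPair f g) x (npair a b)
| eComp f g x y z : eval p g x y -> eval p f y z -> eval p (PComp f g) x z
| eRec f g x n y : evrec p f g x n y -> eval p (PRec f g) (npair x n) y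
| eMu f x n : eval p f (npair x n) 0 ->
    (forall i, (i < n)%N -> exists v, v <> 0%N /\ eval p f (npair x i) v) ->
    eval p (PMu f) x n
with evrec (p : nat -> nat) : prog -> prog -> nat -> nat -> nat -> Prop :=
| rZero f g x y : eval p f x y -> evrec p f g x 0 y
| rSucc f g x n y z : evrec p f g x n y -> eval p g (npair x (npair n y)) z ->
    evrec p f g x n.+1 z.

Definition computes (e : prog) (p q : nat -> nat) : Prop :=
  forall k, eval p e k (q k).

Definition computable_seq (q : nat -> nat) : Prop :=
  exists e, computes e (fun _ => 0%N) q.

Definition zz (a : nat) : R :=
  if odd a then - (a.+1./2)%:R else (a./2)%:R.

(* every rational number arises (notation of Q, as real numbers) *)
Definition qdec (c : nat) : R :=
  let: (a, b) := nunpair c in zz a / (b.+1)%:R.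

Definition qpos (c : nat) : R :=
  let: (a, b) := nunpair c in (a.+1)%:R / (b.+1)%:R.

Fixpoint vcomp (c i : nat) : nat :=
  match i with
  | 0 => (nunpair c).1
  | i'.+1 => vcomp (nunpair c).2 i'
  end.

Definition vdec (n : nat) (c : nat) : 'I_n -> R := fun i => qdec (vcomp c i).
Arguments vdec : clear implicits.

Definition edist (n : nat) (x y : 'I_n -> R) : R :=
  Num.sqrt (\sum_(i < n) (x i - y i) ^+ 2).

Definition eball (n : nat) (x : 'I_n -> R) (r : R) : set ('I_n -> R) :=
  [set y | edist x y < r].
Definition ecball (n : nat) (x : 'I_n -> R) (r : R) : set ('I_n -> R) :=
  [set y | edist x y <= r].

Definition eopen (n : nat) (U : set ('I_n -> R)) : Prop :=
  forall x, U x -> exists2 r : R, 0 < r & eball x r `<=` U.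

Definition rhon_name (n : nat) (p : nat -> nat) (x : 'I_n -> R) : Prop :=
  forall k, edist (vdec n (p k)) x <= 2 ^- k.

(* theta^n_< : p lists rational balls (code 0 = no ball) whose union is U *)
Definition bdec (n : nat) (c : nat) : set ('I_n -> R) :=
  match c with
  | 0 => set0
  | c'.+1 => eball (vdec n (nunpair c').1) (qpos (nunpair c').2)
  end.
Arguments bdec : clear implicits.

Definition theta_name (n : nat) (p : nat -> nat) (U : set ('I_n -> R)) : Prop :=
  forall x, U x <-> exists k, bdec n (p k) x.

(* rho_< : rationals approximating v from below, with supremum v
   (extended to v = +oo as unbounded sequences) *)
Definition rholt_name (q : nat -> nat) (v : \bar R) : Prop :=
  (forall j, ((qdec (q j))%:E <= v)%E) /\
  (forall t : R, (t%:E < v)%E -> exists j, t < qdec (q j)).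

Definition Moo (n m : nat) (X : set ('I_n -> R)) (f : ('I_n -> R) -> ('I_m -> R))
  (x : 'I_n -> R) (k : nat) : \bar R :=
  ereal_sup (@EFin R @`
    [set s : R | 0 <= s /\ ecball (f x) s `<=` f @` (eball x (2 ^- k) `&` X)]).

Definition re_open (n : nat) (X : set ('I_n -> R)) : Prop :=
  exists p, computable_seq p /\ theta_name p X.

Definition computable_on (n m : nat) (X : set ('I_n -> R))
  (f : ('I_n -> R) -> ('I_m -> R)) : Prop :=
  exists e, forall x p, X x -> rhon_name p x ->
    exists q, computes e p q /\ rhon_name q (f x).

Definition open_map_on (n m : nat) (X : set ('I_n -> R))
  (f : ('I_n -> R) -> ('I_m -> R)) : Prop :=
  forall U, eopen U -> U `<=` X -> eopen (f @` U).

Definition effectively_open (n m : nat) (X : set ('I_n -> R))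
  (f : ('I_n -> R) -> ('I_m -> R)) : Prop :=
  exists e, forall U p, eopen U -> U `<=` X -> theta_name p U ->
    exists q, computes e p q /\ theta_name q (f @` U).

Definition moo_lower_computable (n m : nat) (X : set ('I_n -> R))
  (f : ('I_n -> R) -> ('I_m -> R)) : Prop :=
  exists e, forall c k, X (vdec n c) ->
    exists q, (forall j, eval (fun _ => 0%N) e (npair (npair c k) j) (q j)) /\
              rholt_name q (Moo X f (vdec n c) k).

(* Main.v *)
Require Import Defs.
From mathcomp Require Import all_boot all_algebra all_classical all_reals.
From mathcomp Require Import Rstruct.
From mathcomp Require all_order ereal zify ring lra.

Module M1.
Require Import Defs.
From mathcomp Require Import all_boot all_algebra all_classical all_reals.
From mathcomp Require Import Rstruct zify.
Set Implicit Arguments. Unset Strict Implicit.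
Lemma tri_step s : ((s.+1) * (s.+2))./2 = (s * s.+1)./2 + s.+1.
Proof.
have -> : (s.+1 * s.+2) = s * s.+1 + (s.+1).*2.
  rewrite -mul2n; lia.
by rewrite halfD odd_double andbF add0n doubleK.
Qed.

Lemma npair_next c : npair (nunpair c.+1).1 (nunpair c.+1).2 = (npair (nunpair c).1 (nunpair c).2).+1.
Proof.
rewrite /=; case: (nunpair c) => [[|x] y] /=; rewrite /npair.
- by rewrite !addn0 add0n tri_step addnS.
- rewrite !addnS addSn; lia.
Qed.

Lemma npair_unpair c : npair (nunpair c).1 (nunpair c).2 = c.
Proof. elim: c => [|c IH]; first by []. by rewrite npair_next IH. Qed.

Lemma nunpair_surj x y : exists c, nunpair c = (x, y).
Proof.
move: x y.
suff H : forall s j, j <= s -> exists c, nunpair c = (s - j, j).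
  move=> x y; have [c Hc] := H (x + y) y (leq_addl _ _).
  by exists c; rewrite addnK in Hc.
elim=> [|s IH] j.
  by rewrite leqn0 => /eqP ->; exists 0.
elim: j => [|j IHj] Hj.
  have [c Hc] := IH s (leqnn s). exists c.+1.
  by rewrite /= Hc subnn subn0.
have [c Hc] := IHj (ltnW Hj). exists c.+1. rewrite /= Hc.
have -> : s.+1 - j = (s - j).+1 by lia.
by rewrite subSS.
Qed.

Lemma nunpair_npair x y : nunpair (npair x y) = (x, y).
Proof.
have [c Hc] := nunpair_surj x y.
have := npair_unpair c; rewrite Hc /= => ->; exact: Hc.
Qed.

Lemma npair_fst x y : (nunpair (npair x y)).1 = x.
Proof. by rewrite nunpair_npair. Qed.
Lemma npair_snd x y : (nunpair (npair x y)).2 = y.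
Proof. by rewrite nunpair_npair. Qed.

End M1.

Module M2.
Require Import Defs.
From mathcomp Require Import all_boot all_algebra all_classical all_reals.
From mathcomp Require Import Rstruct zify.
Import M1.
Set Implicit Arguments. Unset Strict Implicit.
Section Ind.
Variable p : nat -> nat.
Variable P : prog -> nat -> nat -> Prop.
Variable Q : prog -> prog -> nat -> nat -> nat -> Prop.
Hypothesis hZero : forall x, P PZero x 0.
Hypothesis hSucc : forall x, P PSucc x x.+1.
Hypothesis hId : forall x, P PId x x.
Hypothesis hFst : forall x, P PFst x (nunpair x).1.
Hypothesis hSnd : forall x, P PSnd x (nunpair x).2.
Hypothesis hOracle : forall x, P POracle x (p x).
Hypothesis hPair : forall f g x a b, eval p f x a -> P f x a -> eval p g x b -> P g x b ->
  P (PPair f g) x (npair a b).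
Hypothesis hComp : forall f g x y z, eval p g x y -> P g x y -> eval p f y z -> P f y z ->
  P (PComp f g) x z.
Hypothesis hRec : forall f g x n y, evrec p f g x n y -> Q f g x n y -> P (PRec f g) (npair x n) y.
Hypothesis hMu : forall f x n, eval p f (npair x n) 0 -> P f (npair x n) 0 ->
  (forall i, i < n -> exists v, v <> 0 /\ eval p f (npair x i) v /\ P f (npair x i) v) ->
  P (PMu f) x n.
Hypothesis hR0 : forall f g x y, eval p f x y -> P f x y -> Q f g x 0 y.
Hypothesis hRS : forall f g x n y z, evrec p f g x n y -> Q f g x n y ->
  eval p g (npair x (npair n y)) z -> P g (npair x (npair n y)) z -> Q f g x n.+1 z.

Fixpoint eval_ind2 e x y (H : eval p e x y) {struct H} : P e x y
with evrec_ind2 f g x n y (H : evrec p f g x n y) {struct H} : Q f g x n y.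
Proof.
- destruct H.
  + apply hZero.
  + apply hSucc.
  + apply hId.
  + apply hFst.
  + apply hSnd.
  + apply hOracle.
  + apply hPair; auto.
  + eapply hComp; eauto.
  + apply hRec; auto.
  + apply hMu; auto.
    intros i Hi. destruct (H0 i Hi) as [v [Hv Hev]].
    exists v. split; [exact Hv|split; [exact Hev|]]. exact (eval_ind2 _ _ _ Hev).
- destruct H.
  + apply hR0; auto.
  + eapply hRS; eauto.
Qed.
End Ind.

Lemma npair_inj x y x' y' : npair x y = npair x' y' -> x = x' /\ y = y'.
Proof.
move=> H. have := nunpair_npair x y. rewrite H nunpair_npair. by case=> -> ->.
Qed.

Lemma eval_det p e x y : eval p e x y -> forall y', eval p e x y' -> y = y'.
Proof.
move=> H.
apply: (@eval_ind2 p (fun e x y => forall y', eval p e x y' -> y = y')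
  (fun f g x n y => forall y', evrec p f g x n y' -> y = y')) H
  => {e x y}.
- by move=> x y' H; inversion H.
- by move=> x y' H; inversion H.
- by move=> x y' H; inversion H.
- by move=> x y' H; inversion H.
- by move=> x y' H; inversion H.
- by move=> x y' H; inversion H.
- move=> f g x a b _ IHa _ IHb y' H; inversion H; subst.
  by rewrite (IHa _ ltac:(eassumption)) (IHb _ ltac:(eassumption)).
- move=> f g x y z _ IHy _ IHz z' H; inversion H; subst.
  match goal with H1 : eval p g x ?w |- _ => have E := IHy _ H1 end; subst.
  exact: IHz.
- move=> f g x n y _ IH y' H; inversion H; subst.
  match goal with H0 : npair _ _ = npair _ _ |- _ => have [E1 E2] := npair_inj H0 end; subst.
  exact: IH.
- move=> f x n _ IH0 IHlt y' H; inversion H; subst.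
  case: (ltngtP n y') => // Hlt.
  + have [v [Hv Hev]] := H2 n Hlt. have E := IH0 _ Hev. by subst.
  + have [v [Hv [_ IHv]]] := IHlt _ Hlt. have E := IHv _ H1. by subst.
- move=> f g x y _ IH y' H; inversion H; subst. exact: IH.
- move=> f g x n y z _ IH _ IHz z' H; inversion H; subst.
  match goal with H1 : evrec p f g x n ?w |- _ => have E := IH _ H1 end; subst.
  exact: IHz.
Qed.

Definition agree (p p' : nat -> nat) N := forall i, i < N -> p' i = p i.

Lemma agree_mono p p' N M : N <= M -> agree p p' M -> agree p p' N.
Proof. move=> NM H i Hi; apply: H; exact: leq_trans Hi NM. Qed.

Lemma combine_bound (n : nat) (Qp : nat -> nat -> Prop) :
  (forall i N M, N <= M -> Qp i N -> Qp i M) ->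
  (forall i, i < n -> exists N, Qp i N) -> exists N, forall i, i < n -> Qp i N.
Proof.
move=> mono; elim: n => [|n IH] H; first by exists 0.
have [N1 H1] := IH (fun i Hi => H i (ltnW Hi)).
have [N2 H2] := H n (leqnn _).
exists (maxn N1 N2) => i Hi.
case: (ltngtP i n) => Hin.
- apply: mono (H1 _ Hin); exact: leq_maxl.
- by move: Hi; rewrite ltnS leqNgt Hin.
- subst; apply: mono H2; exact: leq_maxr.
Qed.

Lemma eval_fu p e x y : eval p e x y ->
  exists N, forall p', agree p p' N -> eval p' e x y.
Proof.
move=> H.
apply: (@eval_ind2 p (fun e x y => exists N, forall p', agree p p' N -> eval p' e x y)
  (fun f g x n y => exists N, forall p', agree p p' N -> evrec p' f g x n y)) H
  => {e x y}.
- by move=> x; exists 0 => p' _; constructor.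
- by move=> x; exists 0 => p' _; constructor.
- by move=> x; exists 0 => p' _; constructor.
- by move=> x; exists 0 => p' _; constructor.
- by move=> x; exists 0 => p' _; constructor.
- move=> x; exists x.+1 => p' Ha. rewrite -(Ha x (leqnn _)). constructor.
- move=> f g x a b _ [N1 H1] _ [N2 H2]; exists (maxn N1 N2) => p' Ha.
  constructor; [apply: H1|apply: H2]; apply: agree_mono Ha;
   [exact: leq_maxl|exact: leq_maxr].
- move=> f g x y z _ [N1 H1] _ [N2 H2]; exists (maxn N1 N2) => p' Ha.
  econstructor; [apply: H1|apply: H2]; apply: agree_mono Ha;
   [exact: leq_maxl|exact: leq_maxr].
- move=> f g x n y _ [N H]; exists N => p' Ha. constructor; exact: H.
- move=> f x n _ [N1 H1] Hlt.
  have [N2 H2] : exists N, forall i, i < n -> (fun i N => forall p', agree p p' N ->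
        exists v, v <> 0 /\ eval p' f (npair x i) v) i N.
    apply: combine_bound.
  + move=> i N M NM HQ p' Ha; apply: HQ; exact: agree_mono Ha.
  + move=> i Hi; have [v [Hv [_ [N HN]]]] := Hlt i Hi.
    exists N => p' Ha; exists v; split => //; exact: HN.
  exists (maxn N1 N2) => p' Ha. constructor.
  + apply: H1; apply: agree_mono Ha; exact: leq_maxl.
  + move=> i Hi; apply: H2 => //; apply: agree_mono Ha; exact: leq_maxr.
- move=> f g x y _ [N H]; exists N => p' Ha. constructor; exact: H.
- move=> f g x n y z _ [N1 H1] _ [N2 H2]; exists (maxn N1 N2) => p' Ha.
  econstructor; [apply: H1|apply: H2]; apply: agree_mono Ha;
   [exact: leq_maxl|exact: leq_maxr].
Qed.

Definition rearr := PPair (PComp PFst PFst) (PPair (PComp PSnd PFst) PSnd).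
Definition outer := PPair (PPair PFst (PComp PFst PSnd)) (PComp PSnd PSnd).

Fixpoint subo (e : prog) : prog := match e with
| PZero => PZero
| PSucc => PComp PSucc PSnd
| PId => PSnd
| PFst => PComp PFst PSnd
| PSnd => PComp PSnd PSnd
| POracle => PFst
| PPair f g => PPair (subo f) (subo g)
| PComp f g => PComp (subo f) (PPair PFst (subo g))
| PRec f g => PComp (PRec (subo f) (PComp (subo g) rearr)) outer
| PMu f => PMu (PComp (subo f) rearr)
end.

Lemma ev_fst p a b : eval p PFst (npair a b) a.
Proof. have := eFst p (npair a b); by rewrite npair_fst. Qed.
Lemma ev_snd p a b : eval p PSnd (npair a b) b.
Proof. have := eSnd p (npair a b); by rewrite npair_snd. Qed.

Lemma ev_rearr p c x m : eval p rearr (npair (npair c x) m) (npair c (npair x m)).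
Proof.
constructor; first by econstructor; [exact: ev_fst| exact: ev_fst].
constructor; first by econstructor; [exact: ev_fst| exact: ev_snd].
exact: ev_snd.
Qed.

Lemma ev_outer p c x m : eval p outer (npair c (npair x m)) (npair (npair c x) m).
Proof.
constructor; first constructor; first exact: ev_fst.
- by econstructor; [exact: ev_snd| exact: ev_fst].
- by econstructor; [exact: ev_snd| exact: ev_snd].
Qed.

Lemma subo_ok c e x y : eval (fun _ => c) e x y -> forall p', eval p' (subo e) (npair c x) y.
Proof.
move=> H.
apply: (@eval_ind2 (fun _ => c) (fun e x y => forall p', eval p' (subo e) (npair c x) y)
  (fun f g x n y => forall p', evrec p' (subo f) (PComp (subo g) rearr) (npair c x) n y)) H
  => {e x y}.
- by move=> x p'; constructor.
- by move=> x p' /=; econstructor; [exact: ev_snd|constructor].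
- by move=> x p' /=; exact: ev_snd.
- by move=> x p' /=; econstructor; [exact: ev_snd|constructor].
- by move=> x p' /=; econstructor; [exact: ev_snd|constructor].
- by move=> x p' /=; exact: ev_fst.
- by move=> f g x a b _ IHa _ IHb p' /=; constructor.
- move=> f g x y z _ IHy _ IHz p' /=; econstructor; last exact: IHz.
  by constructor; [exact: ev_fst|].
- move=> f g x n y _ IH p' /=; econstructor; first exact: ev_outer.
  by constructor.
- move=> f x n _ IH0 IHlt p' /=; constructor.
  + by econstructor; [exact: ev_rearr|].
  + move=> i Hi; have [v [Hv [_ IHv]]] := IHlt i Hi.
    exists v; split => //; by econstructor; [exact: ev_rearr|].
- by move=> f g x y _ IH p'; constructor.
- move=> f g x n y z _ IH _ IHz p'; econstructor; first exact: IH.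
  by econstructor; [exact: ev_rearr|].
Qed.

End M2.

Module M3.
Require Import Defs.
From mathcomp Require Import all_boot all_algebra all_classical all_reals.
From mathcomp Require Import Rstruct zify.
Import M1 M2.
Set Implicit Arguments. Unset Strict Implicit.
Definition pcon (P : (nat -> nat) -> nat -> Prop) (F : (nat -> nat) -> nat -> nat) :=
  exists e, forall p x, P p x -> eval p e x (F p x).
Notation TT := (fun (_ : nat -> nat) (_ : nat) => True).

Lemma pc_ext P F G : (forall p x, P p x -> F p x = G p x) -> pcon P F -> pcon P G.
Proof. move=> E [e He]; exists e => p x Px; rewrite -E //; exact: He. Qed.

Lemma pc_weak P P' F : (forall p x, P' p x -> P p x) -> pcon P F -> pcon P' F.
Proof. move=> I [e He]; exists e => p x Px; exact/He/I. Qed.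

Lemma pc_zero P : pcon P (fun _ _ => 0).
Proof. by exists PZero => p x _; constructor. Qed.

Lemma pc_id P : pcon P (fun _ x => x).
Proof. by exists PId => p x _; constructor. Qed.

Lemma pc_comp P P' F G : pcon P G -> pcon P' F -> (forall p x, P p x -> P' p (G p x)) ->
  pcon P (fun p x => F p (G p x)).
Proof.
move=> [eg Hg] [ef Hf] I; exists (PComp ef eg) => p x Px.
econstructor; [exact: Hg| exact/Hf/I].
Qed.

Lemma pc_prog P Arg F e : pcon P Arg -> (forall p x, P p x -> eval p e (Arg p x) (F p x)) ->
  pcon P F.
Proof.
move=> [ea Ha] H; exists (PComp e ea) => p x Px.
econstructor; [exact: Ha| exact: H].
Qed.

Lemma pc_succ P F : pcon P F -> pcon P (fun p x => (F p x).+1).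
Proof. move=> H; apply: (pc_prog (e := PSucc) H) => p x _; constructor. Qed.
Lemma pc_fst P F : pcon P F -> pcon P (fun p x => (nunpair (F p x)).1).
Proof. move=> H; apply: (pc_prog (e := PFst) H) => p x _; constructor. Qed.
Lemma pc_snd P F : pcon P F -> pcon P (fun p x => (nunpair (F p x)).2).
Proof. move=> H; apply: (pc_prog (e := PSnd) H) => p x _; constructor. Qed.
Lemma pc_orc P F : pcon P F -> pcon P (fun p x => p (F p x)).
Proof. move=> H; apply: (pc_prog (e := POracle) H) => p x _; constructor. Qed.

Lemma pc_pair P F G : pcon P F -> pcon P G -> pcon P (fun p x => npair (F p x) (G p x)).
Proof. move=> [ef Hf] [eg Hg]; exists (PPair ef eg) => p x Px; constructor; auto. Qed.

Lemma pc_const P k : pcon P (fun _ _ => k).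
Proof. elim: k => [|k IH]; [exact: pc_zero| exact: pc_succ]. Qed.

Lemma pc_rec (B : nat -> nat) (S : nat -> nat -> nat -> nat) (H : nat -> nat -> nat) :
  (forall a, H a 0 = B a) -> (forall a n, H a n.+1 = S a n (H a n)) ->
  pcon TT (fun _ a => B a) ->
  pcon TT (fun _ z => S (nunpair z).1 (nunpair (nunpair z).2).1 (nunpair (nunpair z).2).2) ->
  pcon TT (fun _ z => H (nunpair z).1 (nunpair z).2).
Proof.
move=> H0 HS [eb Hb] [es Hs]; exists (PRec eb es) => p z _.
rewrite -{1}(npair_unpair z); constructor.
set a := (nunpair z).1; elim: (nunpair z).2 => [|n IH].
- rewrite H0; constructor; exact: Hb.
- rewrite HS; econstructor; first exact: IH.
  have := Hs p (npair a (npair n (H a n))) I.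
  by rewrite !nunpair_npair /=.
Qed.

Lemma pc2 P (H : nat -> nat -> nat) A B :
  pcon TT (fun _ z => H (nunpair z).1 (nunpair z).2) -> pcon P A -> pcon P B ->
  pcon P (fun p x => H (A p x) (B p x)).
Proof.
move=> HH HA HB.
have := pc_comp (pc_pair HA HB) HH (fun _ _ _ => I).
apply: pc_ext => p x _; by rewrite npair_fst npair_snd.
Qed.

Lemma pcA_add : pcon TT (fun _ z => (nunpair z).1 + (nunpair z).2).
Proof.
apply: (@pc_rec id (fun _ _ y => y.+1)) => //.
- by move=> a; rewrite addn0.
- by move=> a n; rewrite addnS.
- exact: pc_id.
- apply: pc_succ; do 2 apply: pc_snd; exact: pc_id.
Qed.

Lemma pc_add P A B : pcon P A -> pcon P B -> pcon P (fun p x => A p x + B p x).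
Proof. exact: pc2 pcA_add. Qed.

Lemma pcA_mul : pcon TT (fun _ z => (nunpair z).1 * (nunpair z).2).
Proof.
apply: (@pc_rec (fun _ => 0) (fun a _ y => y + a)) => //.
- by move=> a; rewrite muln0.
- by move=> a n; rewrite mulnS addnC.
- exact: pc_zero.
- apply: pc_add; [do 2 apply: pc_snd| apply: pc_fst]; exact: pc_id.
Qed.

Lemma pc_mul P A B : pcon P A -> pcon P B -> pcon P (fun p x => A p x * B p x).
Proof. exact: pc2 pcA_mul. Qed.

Lemma pcA_pred : pcon TT (fun _ z => (nunpair z).2.-1).
Proof.
apply: (@pc_rec (fun _ => 0) (fun _ n _ => n) (fun _ n => n.-1)) => //.
- exact: pc_zero.
- apply: pc_fst; apply: pc_snd; exact: pc_id.
Qed.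

Lemma pc_pred P A : pcon P A -> pcon P (fun p x => (A p x).-1).
Proof. move=> HA; exact: (@pc2 P (fun _ b => b.-1) _ _ pcA_pred (pc_zero P) HA). Qed.

Lemma pcA_sub : pcon TT (fun _ z => (nunpair z).1 - (nunpair z).2).
Proof.
apply: (@pc_rec id (fun _ _ y => y.-1)) => //.
- by move=> a; rewrite subn0.
- by move=> a n; rewrite subnS.
- exact: pc_id.
- apply: pc_pred; do 2 apply: pc_snd; exact: pc_id.
Qed.

Lemma pc_sub P A B : pcon P A -> pcon P B -> pcon P (fun p x => A p x - B p x).
Proof. exact: pc2 pcA_sub. Qed.

Lemma pcA_exp : pcon TT (fun _ z => (nunpair z).1 ^ (nunpair z).2).
Proof.
apply: (@pc_rec (fun _ => 1) (fun a _ y => y * a)) => //.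
- by move=> a n; rewrite expnS mulnC.
- exact: pc_const.
- apply: pc_mul; [do 2 apply: pc_snd| apply: pc_fst]; exact: pc_id.
Qed.

Lemma pc_exp P A B : pcon P A -> pcon P B -> pcon P (fun p x => A p x ^ B p x).
Proof. exact: pc2 pcA_exp. Qed.

Lemma pcA_odd : pcon TT (fun _ z => nat_of_bool (odd (nunpair z).2)).
Proof.
apply: (@pc_rec (fun _ => 0) (fun _ _ y => 1 - y) (fun _ n => nat_of_bool (odd n))) => //.
- by move=> a n /=; case: (odd n).
- exact: pc_zero.
- apply: pc_sub; [exact: pc_const| do 2 apply: pc_snd; exact: pc_id].
Qed.

Lemma pc_odd P A : pcon P A -> pcon P (fun p x => nat_of_bool (odd (A p x))).
Proof. move=> HA; exact: (@pc2 P (fun _ b => nat_of_bool (odd b)) _ _ pcA_odd (pc_zero P) HA). Qed.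

Lemma pcA_half : pcon TT (fun _ z => ((nunpair z).2)./2).
Proof.
apply: (@pc_rec (fun _ => 0) (fun _ n y => y + nat_of_bool (odd n)) (fun _ n => n./2)) => //.
- by move=> a n /=; rewrite uphalf_half addnC.
- exact: pc_zero.
- apply: pc_add; first by do 2 apply: pc_snd; exact: pc_id.
  apply: pc_odd; apply: pc_fst; apply: pc_snd; exact: pc_id.
Qed.

Lemma pc_half P A : pcon P A -> pcon P (fun p x => (A p x)./2).
Proof. move=> HA; exact: (@pc2 P (fun _ b => b./2) _ _ pcA_half (pc_zero P) HA). Qed.

Lemma pc_ltb P A B : pcon P A -> pcon P B -> pcon P (fun p x => nat_of_bool (A p x < B p x)).
Proof.
move=> HA HB.
have H := pc_sub (pc_const P 1) (pc_sub (pc_const P 1) (pc_sub HB HA)).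
apply: pc_ext H => p x _. case: ltnP => H; lia.
Qed.

Lemma pc_andb P A B : pcon P (fun p x => nat_of_bool (A p x)) -> pcon P (fun p x => nat_of_bool (B p x)) ->
  pcon P (fun p x => nat_of_bool (A p x && B p x)).
Proof.
move=> HA HB; apply: pc_ext (pc_mul HA HB) => p x _. by case: (A p x); case: (B p x).
Qed.

Lemma pc_eqb P A B : pcon P (fun p x => nat_of_bool (A p x)) -> pcon P (fun p x => nat_of_bool (B p x)) ->
  pcon P (fun p x => nat_of_bool (A p x == B p x)).
Proof.
move=> HA HB.
have H := pc_sub (pc_const P 1) (pc_add (pc_sub HA HB) (pc_sub HB HA)).
apply: pc_ext H => p x _. by case: (A p x); case: (B p x).
Qed.

Lemma pc_negb P A : pcon P (fun p x => nat_of_bool (A p x)) -> pcon P (fun p x => nat_of_bool (~~ A p x)).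
Proof.
move=> HA; have H := pc_sub (pc_const P 1) HA.
apply: pc_ext H => p x _. by case: (A p x).
Qed.

Lemma pc_if P (b : (nat -> nat) -> nat -> bool) F G : pcon P (fun p x => nat_of_bool (b p x)) ->
  pcon P F -> pcon P G -> pcon P (fun p x => if b p x then F p x else G p x).
Proof.
move=> Hb HF HG.
have H := pc_add (pc_mul Hb HF) (pc_mul (pc_sub (pc_const P 1) Hb) HG).
apply: pc_ext H => p x _. case: (b p x) => /=; lia.
Qed.

End M3.

Module M4.
Require Import Defs.
From mathcomp Require Import all_boot all_order all_algebra all_classical all_reals.
From mathcomp Require Import Rstruct ring lra.
Set Implicit Arguments. Unset Strict Implicit.
Import Order.TTheory GRing.Theory Num.Theory.
Local Open Scope ring_scope.
Section Geo.
Variable n : nat.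
Implicit Types a b x y z : 'I_n -> R.

Lemma CS a b : (\sum_i a i * b i) ^+ 2 <= (\sum_i a i ^+ 2) * (\sum_i b i ^+ 2).
Proof.
set S := \sum_i _; set A := \sum_i _; set B := \sum_i _.
have E : \sum_i \sum_j (a i * b j - a j * b i) ^+ 2 = A * B + B * A - 2 * (S * S).
  rewrite /A /B /S !big_distrlr /= mulr_sumr.
  rewrite -big_split -sumrB /=; apply: eq_bigr => i _.
  rewrite mulr_sumr -big_split -sumrB /=; apply: eq_bigr => j _. ring.
have H0 : 0 <= \sum_i \sum_j (a i * b j - a j * b i) ^+ 2.
  apply: sumr_ge0 => i _; apply: sumr_ge0 => j _; exact: sqr_ge0.
rewrite E in H0. rewrite expr2. lra.
Qed.

Lemma mink a b : Num.sqrt (\sum_i (a i + b i) ^+ 2) <=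
  Num.sqrt (\sum_i a i ^+ 2) + Num.sqrt (\sum_i b i ^+ 2).
Proof.
set S := \sum_i a i * b i; set A := \sum_i a i ^+ 2; set B := \sum_i b i ^+ 2.
have A0 : 0 <= A by apply: sumr_ge0 => i _; exact: sqr_ge0.
have B0 : 0 <= B by apply: sumr_ge0 => i _; exact: sqr_ge0.
have E : \sum_i (a i + b i) ^+ 2 = A + B + S *+ 2.
  rewrite /A /B /S -sumrMnl -!big_split /=; apply: eq_bigr => i _; ring.
have HS : S <= Num.sqrt A * Num.sqrt B.
  rewrite -sqrtrM // -[S]/(S) (le_trans (ler_norm S)) // -sqrtr_sqr ler_sqrt.
    exact: CS.
  exact: mulr_ge0.
have sA := sqrtr_ge0 A; have sB := sqrtr_ge0 B.
rewrite E -[_ + _ in leRHS]ger0_norm ?addr_ge0 // -sqrtr_sqr ler_sqrt ?sqr_ge0 //.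
rewrite sqrrD !sqr_sqrtr //. lra.
Qed.

Lemma edist_ge0 x y : 0 <= edist x y.
Proof. exact: sqrtr_ge0. Qed.

Lemma edist_sym x y : edist x y = edist y x.
Proof. rewrite /edist; congr Num.sqrt; apply: eq_bigr => i _; ring. Qed.

Lemma edist_xx x : edist x x = 0.
Proof.
rewrite /edist (eq_bigr (fun _ => 0)) ?big1 ?sqrtr0 // => i _; by rewrite subrr expr0n.
Qed.

Lemma edist_tri x y z : edist x z <= edist x y + edist y z.
Proof.
rewrite /edist; have := mink (fun i => x i - y i) (fun i => y i - z i).
congr (Num.sqrt _ <= _); apply: eq_bigr => i _; ring.
Qed.

Lemma sq_sum_le (r : seq 'I_n) (u : 'I_n -> R) : (forall i, 0 <= u i) ->
  \sum_(i <- r) u i ^+ 2 <= (\sum_(i <- r) u i) ^+ 2.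
Proof.
move=> u0; elim: r => [|i r IH]; first by rewrite !big_nil expr0n.
rewrite !big_cons. have : 0 <= \sum_(j <- r) u j by apply: sumr_ge0.
have := u0 i. nra.
Qed.

Lemma edist_le_sum x y : edist x y <= \sum_i `|x i - y i|.
Proof.
have H0 : 0 <= \sum_i `|x i - y i| by apply: sumr_ge0 => i _.
rewrite /edist -(ger0_norm H0) -sqrtr_sqr ler_sqrt ?sqr_ge0 //.
have := @sq_sum_le (index_enum 'I_n) (fun i => `|x i - y i|) (fun i => normr_ge0 _).
congr (_ <= _). apply: eq_bigr => i _. by rewrite real_normK // num_real.
Qed.
End Geo.

End M4.

Module M5.
Require Import Defs.
From mathcomp Require Import all_boot all_order all_algebra all_classical all_reals.
From mathcomp Require Import Rstruct ring lra.
Import M1 M4.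
Set Implicit Arguments. Unset Strict Implicit.
Import Order.TTheory GRing.Theory Num.Theory.
Local Open Scope ring_scope.
Definition mag (a : nat) : nat := (a + odd a)./2.

Lemma zz_mag a : zz a = if odd a then - (mag a)%:R else (mag a)%:R.
Proof. rewrite /zz /mag. case: (odd a).
- have -> : (a + true)%N = a.+1 by rewrite addn1. done.
- by rewrite addn0.
Qed.

Definition Ncomp (u v : nat) : nat :=
  let a := (nunpair u).1 in let b := (nunpair u).2 in
  let a' := (nunpair v).1 in let b' := (nunpair v).2 in
  if odd a == odd a' then ((mag a * b'.+1 - mag a' * b.+1) + (mag a' * b.+1 - mag a * b'.+1))%N
  else (mag a * b'.+1 + mag a' * b.+1)%N.

Definition Dcomp (u v : nat) : nat := ((nunpair u).2.+1 * (nunpair v).2.+1)%N.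

Lemma distn_R (x y : nat) : (((x - y) + (y - x))%N)%:R = `|x%:R - y%:R| :> R.
Proof.
case: (leqP x y) => H.
- have -> : (x - y)%N = 0%N by apply/eqP; rewrite subn_eq0.
  rewrite add0n natrB // distrC ger0_norm // subr_ge0 ler_nat //.
- have -> : (y - x)%N = 0%N by apply/eqP; rewrite subn_eq0 ltnW.
  have H' := ltnW H.
  by rewrite addn0 natrB // ger0_norm // subr_ge0 ler_nat.
Qed.

Lemma qdec_diff u v :
  (qdec u - qdec v) ^+ 2 = ((Ncomp u v)%:R / (Dcomp u v)%:R) ^+ 2 :> R.
Proof.
rewrite /qdec /Ncomp /Dcomp.
case: (nunpair u) => a b; case: (nunpair v) => a' b' /=.
have Bp : (b.+1%:R : R) != 0 by rewrite pnatr_eq0.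
have Bp' : (b'.+1%:R : R) != 0 by rewrite pnatr_eq0.
have -> : zz a / b.+1%:R - zz a' / b'.+1%:R =
   (zz a * b'.+1%:R - zz a' * b.+1%:R) / (b.+1 * b'.+1)%N%:R.
  rewrite natrM. field. have := ler0n R b; have := ler0n R b'; move=> h1 h2. by apply/andP; split; apply/negP => /eqP; lra.
rewrite expr_div_n [in RHS]expr_div_n; congr (_ / _).
rewrite -real_normK ?num_real //; congr (_ ^+ 2).
rewrite !zz_mag.
case Ea: (odd a); case Ea': (odd a') => /=.
- rewrite distn_R !natrM. rewrite -normrN. congr `|_|. ring.
- have -> : - (mag a)%:R * b'.+1%:R - (mag a')%:R * b.+1%:R =
     - (mag a * b'.+1 + mag a' * b.+1)%N%:R :> R by rewrite natrD !natrM; ring.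
  by rewrite normrN normr_nat.
- have -> : (mag a)%:R * b'.+1%:R - - (mag a')%:R * b.+1%:R =
     (mag a * b'.+1 + mag a' * b.+1)%N%:R :> R by rewrite natrD !natrM; ring.
  by rewrite normr_nat.
- by rewrite distn_R !natrM.
Qed.

Fixpoint accD (k c d : nat) : nat :=
  match k with
  | 0 => 1%N
  | k'.+1 => (accD k' (nunpair c).2 (nunpair d).2 * (Dcomp (nunpair c).1 (nunpair d).1 * Dcomp (nunpair c).1 (nunpair d).1))%N
  end.
Fixpoint accN (k c d : nat) : nat :=
  match k with
  | 0 => 0%N
  | k'.+1 => (accN k' (nunpair c).2 (nunpair d).2 * (Dcomp (nunpair c).1 (nunpair d).1 * Dcomp (nunpair c).1 (nunpair d).1)
             + (Ncomp (nunpair c).1 (nunpair d).1 * Ncomp (nunpair c).1 (nunpair d).1) * accD k' (nunpair c).2 (nunpair d).2)%N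
  end.

Lemma Dcomp_gt0 u v : (0 < Dcomp u v)%N.
Proof. by rewrite /Dcomp muln_gt0. Qed.

Lemma accD_gt0 k c d : (0 < accD k c d)%N.
Proof.
elim: k c d => [|k IH] c d //=.
have h1 := IH (nunpair c).2 (nunpair d).2.
have h2 := Dcomp_gt0 (nunpair c).1 (nunpair d).1.
by rewrite muln_gt0 h1 muln_gt0 h2.
Qed.

Lemma acc_ok k c d : (accN k c d)%:R / (accD k c d)%:R =
  \sum_(i < k) (qdec (vcomp c i) - qdec (vcomp d i)) ^+ 2 :> R.
Proof.
elim: k c d => [|k IH] c d; first by rewrite big_ord0 /= mul0r.
rewrite big_ord_recl /=. rewrite (eq_bigr (fun i : 'I_k =>
  (qdec (vcomp (nunpair c).2 i) - qdec (vcomp (nunpair d).2 i)) ^+ 2)); last first.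
  by move=> i _; rewrite /bump /=.
rewrite -IH qdec_diff.
have D0 : ((Dcomp (nunpair c).1 (nunpair d).1)%:R : R) != 0 by rewrite pnatr_eq0 -lt0n Dcomp_gt0.
have A0 : ((accD k (nunpair c).2 (nunpair d).2)%:R : R) != 0 by rewrite pnatr_eq0 -lt0n accD_gt0.
move: D0 A0; move: (Dcomp _ _) (Ncomp _ _) (accD _ _ _) (accN _ _ _) => D N A M D0 A0.
rewrite natrD !natrM. field. by rewrite D0 A0.
Qed.

Lemma edist_acc n c d : edist (vdec n c) (vdec n d) =
  Num.sqrt ((accN n c d)%:R / (accD n c d)%:R).
Proof. by rewrite acc_ok /edist /vdec. Qed.

Lemma key_real (e A B P N D : R) : 0 <= e -> 0 < B -> 0 < P -> 0 < D -> e ^+ 2 = N / D ->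
  (e + P^-1 < A / B) <-> (B < A * P /\ N * (B * P) ^+ 2 < (A * P - B) ^+ 2 * D).
Proof.
move=> e0 B0 P0 D0 E.
have BP0 : 0 < B * P by exact: mulr_gt0.
have H1 : (e + P^-1 < A / B) <-> (e * (B * P) < A * P - B).
  rewrite -(ltr_pM2r BP0).
  have -> : (e + P^-1) * (B * P) = e * (B * P) + B.
    rewrite mulrDl; congr (_ + _). field. by rewrite gt_eqF.
  have -> : A / B * (B * P) = A * P by field; rewrite gt_eqF.
  split => H; lra.
have EN : N = e ^+ 2 * D by rewrite E mulfVK // gt_eqF.
rewrite H1 EN.
have eBP : 0 <= e * (B * P) by apply: mulr_ge0 => //; exact: ltW.
split.
- move=> H; split; first lra.
  have : (e * (B * P)) ^+ 2 < (A * P - B) ^+ 2.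
    rewrite -subr_gt0 subr_sqr; apply: mulr_gt0; lra.
  rewrite exprMn => H2.
  rewrite (_ : e ^+ 2 * D * (B * P) ^+ 2 = (e ^+ 2 * (B * P) ^+ 2) * D); last by ring.
  by rewrite ltr_pM2r.
- move=> [H2 H3].
  have H4 : (e * (B * P)) ^+ 2 < (A * P - B) ^+ 2.
    rewrite exprMn -(ltr_pM2r D0).
    by rewrite (_ : e ^+ 2 * (B * P) ^+ 2 * D = e ^+ 2 * D * (B * P) ^+ 2); last by ring.
  move: H4; rewrite -subr_gt0 subr_sqr.
  rewrite pmulr_lgt0; [lra|lra].
Qed.

Definition inclb (n c K bc : nat) : bool :=
  let dd := (nunpair bc).1 in let r := (nunpair bc).2 in
  let a := (nunpair r).1 in let b := (nunpair r).2 in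
  (b.+1 < a.+1 * 2 ^ K)%N &&
  (accN n c dd * ((b.+1 * 2 ^ K) * (b.+1 * 2 ^ K)) <
     ((a.+1 * 2 ^ K - b.+1) * (a.+1 * 2 ^ K - b.+1)) * accD n c dd)%N.

Lemma inclb_ok n c K bc : inclb n c K bc <->
  edist (vdec n c) (vdec n (nunpair bc).1) + 2 ^- K < qpos (nunpair bc).2.
Proof.
rewrite /inclb /qpos.
set dd := (nunpair bc).1; set r := (nunpair bc).2; case: (nunpair r) => a b /=.
rewrite (@key_real (edist (vdec n c) (vdec n dd)) a.+1%:R b.+1%:R (2 ^+ K)
   (accN n c dd)%:R (accD n c dd)%:R).
- rewrite -(ltr_nat R) natrM natrX.
  split.
  + case/andP => H1 H2; split => //.
    have H1' : (b.+1 < a.+1 * 2 ^ K)%N by rewrite -(ltr_nat R) natrM natrX.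
    have H1'' := ltnW H1'.
    move: H2; rewrite -(ltr_nat R) !natrM natrB // !natrM !natrX.
    by rewrite !expr2.
  + case=> H1 H2; apply/andP; split => //.
    have H1' : (b.+1 < a.+1 * 2 ^ K)%N by rewrite -(ltr_nat R) natrM natrX.
    have H1'' := ltnW H1'.
    rewrite -(ltr_nat R) !natrM natrB // !natrM !natrX -!expr2 //.
- exact: edist_ge0.
- by rewrite ltr0n.
- by rewrite exprn_gt0.
- by rewrite ltr0n accD_gt0.
- rewrite edist_acc sqr_sqrtr // divr_ge0 //.
Qed.

Definition mchk (t w : nat) : bool :=
  ~~ odd (nunpair w).1 && (2 * (nunpair w).2.+1 < ((nunpair w).1)./2 * 2 ^ t)%N.

Lemma mchk_ok t w : mchk t w <-> 2 * 2 ^- t < qdec w.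
Proof.
rewrite /mchk /qdec; case: (nunpair w) => a b /=.
have B0 : 0 < (b.+1%:R : R) by rewrite ltr0n.
have P0 : 0 < (2 ^+ t : R) by rewrite exprn_gt0.
rewrite /zz; case: (odd a) => /=.
- split => // H; exfalso.
  have : - (uphalf a)%:R / b.+1%:R <= (0 : R).
    rewrite mulNr oppr_le0; apply: divr_ge0 => //; exact: ltW.
  have : 0 < 2 * (2 ^+ t : R)^-1 by apply: mulr_gt0 => //; rewrite invr_gt0.
  move=> h1 h2; have := lt_le_trans (lt_trans h1 H) h2; by rewrite ltxx.
- rewrite -(ltr_nat R) natrM natrM natrX.
  rewrite -(ltr_pM2r B0) -(ltr_pM2r P0) mulfVK ?gt_eqF //.
  have -> : 2 * (2 ^+ t)^-1 * b.+1%:R * 2 ^+ t = 2%:R * b.+1%:R :> R.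
    field. by rewrite gt_eqF.
  by [].
Qed.

End M5.

Module M6.
Require Import Defs.
From mathcomp Require Import all_boot all_order all_algebra all_classical all_reals.
From mathcomp Require Import Rstruct.
Import M1 M2 M3 M5.
Set Implicit Arguments. Unset Strict Implicit.
Section PC2.
Variable P : (nat -> nat) -> nat -> Prop.
Notation pc := (pcon P).

Lemma pc_mag A : pc A -> pc (fun p x => mag (A p x)).
Proof. move=> H; apply: pc_half; apply: pc_add => //; exact: pc_odd. Qed.

Lemma pc_Ncomp U V : pc U -> pc V -> pc (fun p x => Ncomp (U p x) (V p x)).
Proof.
move=> HU HV; rewrite /Ncomp.
have ma := pc_mag (pc_fst HU); have ma' := pc_mag (pc_fst HV).
have b1 := pc_succ (pc_snd HU); have b1' := pc_succ (pc_snd HV).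
apply: pc_if.
- apply: pc_eqb; apply: pc_odd; exact: pc_fst.
- apply: pc_add; apply: pc_sub; apply: pc_mul => //.
- apply: pc_add; apply: pc_mul => //.
Qed.

Lemma pc_Dcomp U V : pc U -> pc V -> pc (fun p x => Dcomp (U p x) (V p x)).
Proof. move=> HU HV; apply: pc_mul; apply: pc_succ; exact: pc_snd. Qed.

Lemma pc_sq A : pc A -> pc (fun p x => A p x ^ 2)%N.
Proof. move=> H; apply: pc_exp => //; exact: pc_const. Qed.

Lemma pc_accD k : forall C D, pc C -> pc D -> pc (fun p x => accD k (C p x) (D p x)).
Proof.
elim: k => [|k IH] C D HC HD /=; first exact: pc_const.
apply: pc_mul; first by apply: IH; exact: pc_snd.
apply: pc_mul; apply: pc_Dcomp; exact: pc_fst.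
Qed.

Lemma pc_accN k : forall C D, pc C -> pc D -> pc (fun p x => accN k (C p x) (D p x)).
Proof.
elim: k => [|k IH] C D HC HD /=; first exact: pc_const.
apply: pc_add; apply: pc_mul.
- by apply: IH; exact: pc_snd.
- apply: pc_mul; apply: pc_Dcomp; exact: pc_fst.
- apply: pc_mul; apply: pc_Ncomp; exact: pc_fst.
- by apply: pc_accD; exact: pc_snd.
Qed.

Lemma pc_inclb n C K BC : pc C -> pc K -> pc BC ->
  pc (fun p x => nat_of_bool (inclb n (C p x) (K p x) (BC p x))).
Proof.
move=> HC HK HB; rewrite /inclb.
have dd := pc_fst HB; have a1 := pc_succ (pc_fst (pc_snd HB));
have b1 := pc_succ (pc_snd (pc_snd HB)).
have p2 := pc_exp (@pc_const P 2) HK.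
apply: pc_andb; apply: pc_ltb.
- done.
- exact: pc_mul.
- apply: pc_mul; first exact: pc_accN.
  apply: pc_mul; exact: pc_mul.
- apply: pc_mul; last exact: pc_accD.
  apply: pc_mul; apply: pc_sub => //; exact: pc_mul.
Qed.

Lemma pc_mchk T W : pc T -> pc W -> pc (fun p x => nat_of_bool (mchk (T p x) (W p x))).
Proof.
move=> HT HW; rewrite /mchk.
apply: pc_andb; first by apply: pc_negb; apply: pc_odd; exact: pc_fst.
apply: pc_ltb.
- apply: pc_mul; [exact: pc_const| apply: pc_succ; exact: pc_snd].
- apply: pc_mul; [apply: pc_half; exact: pc_fst| apply: pc_exp => //; exact: pc_const].
Qed.
End PC2.

End M6.

Module M7.
Require Import Defs.
From mathcomp Require Import all_boot all_order all_algebra all_classical all_reals.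
From mathcomp Require Import Rstruct.
Import M1 M2 M3 M5 M6.
Set Implicit Arguments. Unset Strict Implicit.
Definition dI k := (nunpair k).1.
Definition dC k := (nunpair (nunpair k).2).1.
Definition dK k := (nunpair (nunpair (nunpair k).2).2).1.
Definition dJ k := (nunpair (nunpair (nunpair (nunpair k).2).2).2).1.
Definition dT k := (nunpair (nunpair (nunpair (nunpair k).2).2).2).2.
Definition kcode i c K j t := npair i (npair c (npair K (npair j t))).

Lemma decode_code i c K j t :
  [/\ dI (kcode i c K j t) = i, dC (kcode i c K j t) = c, dK (kcode i c K j t) = K,
      dJ (kcode i c K j t) = j & dT (kcode i c K j t) = t].
Proof. by rewrite /dI /dC /dK /dJ /dT /kcode !nunpair_npair. Qed.

Definition chk1 n (p : nat -> nat) k :=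
  (0 < p (dI k))%N && inclb n (dC k) (dK k) (p (dI k)).-1.

Definition expv (MQ : nat -> nat -> nat -> nat) (FQ : nat -> nat -> nat) k :=
  if mchk (dT k) (MQ (dC k) (dK k) (dJ k))
  then (npair (FQ (dC k) (dT k).+2) (npair 0 (2 ^ dT k - 1))).+1 else 0.

Definition outf n MQ FQ (p : nat -> nat) k := if chk1 n p k then expv MQ FQ k else 0.

Lemma main_prog n (em ef : prog) (Xc : nat -> Prop) (MQ : nat -> nat -> nat -> nat)
  (FQ : nat -> nat -> nat) :
  (forall c K j, Xc c -> eval (fun _ => 0) em (npair (npair c K) j) (MQ c K j)) ->
  (forall c t, Xc c -> eval (fun _ => c) ef t (FQ c t)) ->
  exists e, forall p, (forall k, chk1 n p k -> Xc (dC k)) ->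
    computes e p (outf n MQ FQ p).
Proof.
move=> HM HF.
have pdI : pcon (fun _ _ => True) (fun _ k => dI k) by apply: pc_fst; exact: pc_id.
have [ech Hch] : pcon (fun _ _ => True) (fun p k => nat_of_bool (chk1 n p k)).
  apply: pc_andb; first by apply: pc_ltb; [exact: pc_const| exact: pc_orc].
  apply: pc_inclb.
  - apply: pc_fst; apply: pc_snd; exact: pc_id.
  - apply: pc_fst; do 2 apply: pc_snd; exact: pc_id.
  - apply: pc_pred; exact: pc_orc.
set P := fun (_ : nat -> nat) k => Xc (dC k).
have pC : pcon P (fun _ k => dC k) by apply: pc_fst; apply: pc_snd; exact: pc_id.
have pK : pcon P (fun _ k => dK k) by apply: pc_fst; do 2 apply: pc_snd; exact: pc_id.
have pJ : pcon P (fun _ k => dJ k) by apply: pc_fst; do 3 apply: pc_snd; exact: pc_id.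
have pT : pcon P (fun _ k => dT k) by do 4 apply: pc_snd; exact: pc_id.
have pM : pcon P (fun _ k => MQ (dC k) (dK k) (dJ k)).
  apply: (@pc_prog P (fun _ k => npair 0 (npair (npair (dC k) (dK k)) (dJ k))) _ (subo em)).
    apply: pc_pair; first exact: pc_const.
    by apply: pc_pair => //; apply: pc_pair.
  move=> p k Pk; apply: subo_ok; exact: HM.
have pF : pcon P (fun _ k => FQ (dC k) (dT k).+2).
  apply: (@pc_prog P (fun _ k => npair (dC k) (dT k).+2) _ (subo ef)).
    by apply: pc_pair => //; do 2 apply: pc_succ.
  move=> p k Pk; apply: subo_ok; exact: HF.
have [eex Hex] : pcon P (fun _ k => expv MQ FQ k).
  apply: pc_if; first exact: pc_mchk.
  - apply: pc_succ; apply: pc_pair => //; apply: pc_pair; first exact: pc_const.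
    apply: pc_sub; last exact: pc_const.
    by apply: pc_exp => //; exact: pc_const.
  - exact: pc_const.
exists (PComp (PRec PZero (PComp eex PFst)) (PPair PId ech)) => p Hp k.
econstructor; first by constructor; [constructor| exact: Hch].
rewrite /outf; case E: (chk1 n p k).
- constructor. econstructor; first by constructor; constructor.
  econstructor; first exact: ev_fst.
  apply: Hex; exact: Hp.
- constructor; constructor; constructor.
Qed.

End M7.

Module M8.
Require Import Defs.
From mathcomp Require Import all_boot all_order all_algebra all_classical all_reals.
From mathcomp Require Import ereal Rstruct ring lra.
Import M1 M2 M4.
Set Implicit Arguments. Unset Strict Implicit.
Import Order.TTheory GRing.Theory Num.Theory.
Local Open Scope ring_scope.
Local Open Scope classical_set_scope.
Lemma pow2_gt0 K : 0 < 2 ^- K :> R.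
Proof. by rewrite invr_gt0 exprn_gt0. Qed.

Lemma pow2S K : 2 ^- K.+1 = 2 ^- K / 2 :> R.
Proof. by rewrite exprS invfM mulrC. Qed.

Lemma pow2_le j N : (j <= N)%N -> 2 ^- N <= 2 ^- j :> R.
Proof.
move=> H; rewrite lef_pV2 ?posrE ?exprn_gt0 //.
by rewrite ler_eXn2l // ltr1n.
Qed.

Lemma pow2_small (e : R) : 0 < e -> exists K, 2 ^- K < e.
Proof.
move=> e0; set K := Num.Def.archi_bound e^-1.
have H1 : e^-1 < K%:R by apply: archi_boundP; rewrite invr_ge0 ltW.
have H2 : (K%:R : R) < 2 ^+ K by rewrite -natrX ltr_nat ltn_expl.
exists K; rewrite -[e]invrK ltf_pV2 ?posrE ?invr_gt0 ?exprn_gt0 //.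
exact: lt_trans H2.
Qed.

Lemma zz_int (a : int) : exists z, zz z = a%:~R :> R.
Proof.
case: a => m.
- exists m.*2; rewrite /zz odd_double /= doubleK //.
- exists (m.*2).+1; rewrite /zz /= odd_double /= NegzE.
  by rewrite doubleK mulrNz pmulrn.
Qed.

Lemma rat_approx (r e : R) : 0 < e -> exists z, `|qdec z - r| < e.
Proof.
move=> e0; have [K HK] := pow2_small e0.
have [z Hz] := zz_int (Num.floor (r * 2 ^+ K)).
exists (npair z (2 ^ K - 1)); rewrite /qdec nunpair_npair.
have E : ((2 ^ K - 1).+1)%:R = 2 ^+ K :> R.
  by rewrite subn1 prednK ?expn_gt0 // natrX.
rewrite E Hz.
have P0 : 0 < (2 ^+ K : R) by rewrite exprn_gt0.
have /andP[h1 h2] := floor_itv (r * 2 ^+ K).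
set a := Num.floor _ in h1 h2 *.
rewrite intrD in h2.
have hr : r = (r * 2 ^+ K) / 2 ^+ K by rewrite mulfK ?gt_eqF.
rewrite [in X in `|_ - X|]hr -mulrBl normrM (ger0_norm (ltW (pow2_gt0 K))).
apply: le_lt_trans HK; rewrite -[X in _ <= X]mul1r ler_pM2r ?pow2_gt0 //.
rewrite ler_norml; apply/andP; split; lra.
Qed.

Fixpoint vcode (l : seq nat) : nat :=
  match l with [::] => 0%N | h :: t => npair h (vcode t) end.

Lemma vcomp_vcode l i : (i < size l)%N -> vcomp (vcode l) i = nth 0%N l i.
Proof.
elim: l i => [|h t IH] [|i] //= Hi.
- by rewrite npair_fst.
- by rewrite npair_snd IH.
Qed.

Lemma density n (x : 'I_n -> R) (e : R) : 0 < e -> exists c, edist (vdec n c) x < e.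
Proof.
move=> e0.
have e1 : 0 < e / n.+1%:R by rewrite divr_gt0 // ltr0n.
have [z Hz] : exists z : 'I_n -> nat, forall i, `|qdec (z i) - x i| < e / n.+1%:R.
  have H : forall i : 'I_n, exists zi, `|qdec zi - x i| < e / n.+1%:R.
    move=> i; exact: rat_approx.
  have [z Hz] := choice H. by exists z.
exists (vcode [seq z i | i <- enum 'I_n]).
apply: le_lt_trans (edist_le_sum _ _) _.
have -> : \sum_i `|vdec n (vcode [seq z i | i <- enum 'I_n]) i - x i| =
          \sum_i `|qdec (z i) - x i|.
  apply: eq_bigr => i _; rewrite /vdec vcomp_vcode; last by rewrite size_map size_enum_ord.
  by rewrite (nth_map i) ?size_enum_ord ?nth_ord_enum.
have Hs : \sum_i `|qdec (z i) - x i| <= \sum_(i < n) e / n.+1%:R.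
  by apply: ler_sum => j _; exact: ltW.
apply: le_lt_trans Hs _.
rewrite sumr_const card_ord.
set q := e / n.+1%:R in e1 *.
have E1 : q * n.+1%:R = e by rewrite /q divfK // pnatr_eq0.
rewrite -(mulr_natr q n) -E1 -natr1 mulrDr mulr1. lra.
Qed.

End M8.

Module M9.
Require Import Defs.
From mathcomp Require Import all_boot all_order all_algebra all_classical all_reals.
From mathcomp Require Import ereal Rstruct ring lra.
Import M1 M2 M3 M4 M5 M6 M7 M8.
Set Implicit Arguments. Unset Strict Implicit.
Import Order.TTheory GRing.Theory Num.Theory.
Local Open Scope ring_scope.
Local Open Scope classical_set_scope.
Lemma cont n m (X : set ('I_n -> R)) (f : ('I_n -> R) -> ('I_m -> R)) ef :
  (forall x p, X x -> rhon_name p x -> exists q, computes ef p q /\ rhon_name q (f x)) ->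
  forall x, X x -> forall t, exists N, forall c, X (vdec n c) ->
    edist (vdec n c) x <= 2 ^- N.+1 -> edist (f (vdec n c)) (f x) <= 2 * 2 ^- t.
Proof.
move=> Hf x Xx t.
have [px Hpx] : exists px : nat -> nat, forall j, edist (vdec n (px j)) x <= 2 ^- j.+1.
  have H : forall j, exists c, edist (vdec n c) x < 2 ^- j.+1.
    move=> j; exact: density (pow2_gt0 j.+1).
  have [g Hg] := choice H. exists g => j; exact: ltW (Hg j).
have Npx : rhon_name px x.
  move=> j; apply: le_trans (Hpx j) _; apply: pow2_le; exact: leqnSn.
have [q [Hq Nq]] := Hf x px Xx Npx.
have [N HN] := eval_fu (Hq t).
exists N => c Xc Hc.
set p' := fun j => if (j < N)%N then px j else c.
have Ag : agree px p' N by move=> i Hi; rewrite /p' Hi.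
have Np' : rhon_name p' (vdec n c).
  move=> j; rewrite /p'; case: ifP => Hj.
  - apply: le_trans (edist_tri _ x _) _. rewrite (edist_sym x).
    have h1 := Hpx j.
    have h2 : 2 ^- N.+1 <= 2 ^- j.+1 :> R by apply: pow2_le; rewrite ltnS; exact: ltnW.
    have h3 := pow2S j. lra.
  - by rewrite edist_xx ltW ?pow2_gt0.
have [q' [Hq' Nq']] := Hf _ p' Xc Np'.
have E := eval_det (HN p' Ag) (Hq' t).
apply: le_trans (edist_tri _ (vdec m (q t)) _) _.
rewrite edist_sym E; have := Nq' t; have := Nq t. rewrite -E. lra.
Qed.

Lemma Moo_ge n m (X : set ('I_n -> R)) (f : ('I_n -> R) -> ('I_m -> R)) x k s :
  0 <= s -> ecball (f x) s `<=` f @` (eball x (2 ^- k) `&` X) -> (s%:E <= Moo X f x k)%E.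
Proof. move=> s0 H; apply: ereal_sup_ubound; by exists s. Qed.

Lemma Moo_gt n m (X : set ('I_n -> R)) (f : ('I_n -> R) -> ('I_m -> R)) x k r :
  (r%:E < Moo X f x k)%E -> exists s, [/\ 0 <= s, ecball (f x) s `<=` f @` (eball x (2 ^- k) `&` X) & r < s].
Proof.
move=> H; apply: contrapT => Hn; move: H; apply/negP; rewrite -leNgt.
apply/ereal_supP => y [s [s0 Hs] <-]; rewrite lee_fin leNgt; apply/negP => rs.
by apply: Hn; exists s; split.
Qed.

Lemma eopen_ball n (x : 'I_n -> R) r : eopen (eball x r).
Proof.
move=> y Hy; exists (r - edist x y); first by rewrite subr_gt0.
move=> z Hz; rewrite /eball /=; have := edist_tri x y z; move: Hz Hy; rewrite /eball /=; lra.
Qed.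

Lemma eopen_I n (U V : set ('I_n -> R)) : eopen U -> eopen V -> eopen (U `&` V).
Proof.
move=> HU HV x [Ux Vx]; have [r1 r10 H1] := HU x Ux; have [r2 r20 H2] := HV x Vx.
exists (Num.min r1 r2); first by rewrite lt_min r10 r20.
move=> y Hy; split; [apply: H1|apply: H2]; rewrite /eball /=; apply: (lt_le_trans Hy);
  by rewrite ge_min lexx ?orbT.
Qed.

Lemma chk1_ball n p (U : set ('I_n -> R)) k : theta_name p U -> chk1 n p k ->
  eball (vdec n (dC k)) (2 ^- (dK k)) `<=` U.
Proof.
move=> HU /andP[Hp /inclb_ok Hi] y Hy. apply/HU; exists (dI k).
have -> : p (dI k) = (p (dI k)).-1.+1 by rewrite prednK.
rewrite /bdec /eball /=.
have := edist_tri (vdec n (nunpair (p (dI k)).-1).1) (vdec n (dC k)) y.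
rewrite edist_sym in Hi. move: Hy; rewrite /eball /=. lra.
Qed.

End M9.

Module M10.
Require Import Defs.
From mathcomp Require Import all_boot all_order all_algebra all_classical all_reals.
From mathcomp Require Import ereal Rstruct ring lra.
Import M1 M2 M3 M4 M5 M6 M7 M8 M9.
Set Implicit Arguments. Unset Strict Implicit.
Import Order.TTheory GRing.Theory Num.Theory.
Local Open Scope ring_scope.
Local Open Scope classical_set_scope.
Lemma qpos_pow t : qpos (npair 0 (2 ^ t - 1)) = 2 ^- t :> R.
Proof.
rewrite /qpos nunpair_npair subn1 prednK ?expn_gt0 // natrX mul1r //.
Qed.

Lemma name_const n c : rhon_name (fun _ => c) (vdec n c).
Proof. move=> k; rewrite edist_xx; exact: ltW (pow2_gt0 k). Qed.


Theorem lemma6' (n m : nat) (X : set ('I_n -> R)) (f : ('I_n -> R) -> ('I_m -> R)) :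
  re_open X ->
  computable_on X f ->
  open_map_on X f ->
  moo_lower_computable X f ->
  effectively_open X f.
Proof.
move=> _ [ef Hf] Hopen [em Hm].
have [FQ HFQ] : exists FQ : nat -> nat -> nat, forall c, X (vdec n c) ->
   computes ef (fun _ => c) (FQ c) /\ rhon_name (FQ c) (f (vdec n c)).
  have H : forall c, exists q, X (vdec n c) ->
      computes ef (fun _ => c) q /\ rhon_name q (f (vdec n c)).
    move=> c; case: (pselect (X (vdec n c))) => Xc; last by exists (fun _ => 0%N).
    have [q Hq] := Hf (vdec n c) (fun _ => c) Xc (name_const n c). by exists q.
  have [g Hg] := @choice _ _ _ H; by exists g.
have [MQ HMQ] : exists MQ : nat -> nat -> nat -> nat, forall c K, X (vdec n c) ->
   (forall j, Defs.eval (fun _ => 0%N) em (npair (npair c K) j) (MQ c K j)) /\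
   rholt_name (MQ c K) (Moo X f (vdec n c) K).
  have H : forall cK : nat * nat, exists q, X (vdec n cK.1) ->
     (forall j, Defs.eval (fun _ => 0%N) em (npair (npair cK.1 cK.2) j) (q j)) /\
     rholt_name q (Moo X f (vdec n cK.1) cK.2).
    move=> [c K]; case: (pselect (X (vdec n c))) => Xc; last by exists (fun _ => 0%N).
    have [q Hq] := Hm c K Xc. by exists q.
  have [g Hg] := @choice _ _ _ H; exists (fun c K => g (c, K)) => c K Xc.
  exact: (Hg (c, K) Xc).
have [e He] := @main_prog n em ef (fun c => X (vdec n c)) MQ FQ
  (fun c K j Xc => (HMQ c K Xc).1 j) (fun c t Xc => (HFQ c Xc).1 t).
exists e => U p Uo UX HU.
have Hchk : forall k, chk1 n p k -> X (vdec n (dC k)).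
  move=> k Hk; apply: UX; apply: (chk1_ball HU Hk); rewrite /eball /= edist_xx; exact: pow2_gt0.
exists (outf n MQ FQ p); split; first exact: He.
move=> y; split.
- case=> x Ux <-{y}.
  have [i Hi] := (HU x).1 Ux.
  case Epi: (p i) Hi => [|mm] //; rewrite /bdec /eball /= => Hi.
  set d := vdec n (nunpair mm).1 in Hi.
  set rho := qpos (nunpair mm).2 in Hi.
  have [K HK] : exists K, 2 ^- K < (rho - edist d x) / 2.
    apply: pow2_small; lra.
  set W := eball x (2 ^- K.+1) `&` U.
  have Wo : eopen W by apply: eopen_I => //; exact: eopen_ball.
  have WX : W `<=` X by move=> w [_ Uw]; exact: UX.
  have [r r0 Hr] := Hopen W Wo WX (f x)
    (ex_intro2 _ _ x (conj (ltac:(rewrite /eball /= edist_xx; exact: pow2_gt0) : eball x (2 ^- K.+1) x) Ux) erefl).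
  have [t Ht] : exists t, 2 ^- t < r / 4 by apply: pow2_small; lra.
  have [N HN] := cont Hf (UX x Ux) t.+3.
  have [c Hc] : exists c, edist (vdec n c) x < Num.min (2 ^- N.+1) (2 ^- K.+1).
    apply: density; by rewrite lt_min !pow2_gt0.
  move: Hc; rewrite lt_min => /andP[Hc1 Hc2].
  have Hincl : inclb n c K mm.
    apply/inclb_ok; rewrite -/d -/rho.
    have h3 := edist_tri (vdec n c) x d.
    rewrite (edist_sym x d) in h3.
    have h4 := pow2S K; have h5 := pow2_gt0 K. lra.
  have Hch : forall j, chk1 n p (kcode i c K j t).
    move=> j; have [e1 e2 e3 _ _] := decode_code i c K j t.
    by rewrite /chk1 e1 e2 e3 Epi.
  have Xc : X (vdec n c) by have := Hchk _ (Hch 0%N); have [_ e2 _ _ _] := decode_code i c K 0 t; rewrite e2.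
  have HE := HN c Xc (ltW Hc1).
  have Hs : ecball (f (vdec n c)) (3 * 2 ^- t) `<=` f @` (eball (vdec n c) (2 ^- K) `&` X).
    move=> z Hz.
    have : eball (f x) r z.
      rewrite /eball /=; move: Hz; rewrite /ecball /= => Hz.
      have h3 := edist_tri (f x) (f (vdec n c)) z.
      rewrite (edist_sym (f x) (f (vdec n c))) in h3.
      have h4 := pow2S t; have h5 := pow2S t.+1; have h6 := pow2S t.+2; have h7 := pow2_gt0 t.
      lra.
    move=> /Hr [w [Bw Uw] <-]; exists w => //; split; last exact: UX.
    rewrite /eball /=; have h3 := edist_tri (vdec n c) x w.
    move: Bw; rewrite /eball /= => Bw.
    have h4 := pow2S K. lra.
  have HM := Moo_ge (ltac:(apply: mulr_ge0 => //; exact: ltW (pow2_gt0 t)) : 0 <= 3 * 2 ^- t) Hs.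
  have [_ Hrho2] := (HMQ c K Xc).2.
  have [j Hj] : exists j, 2 * 2 ^- t < qdec (MQ c K j).
    apply: Hrho2; apply: lt_le_trans HM; rewrite lte_fin.
    have := pow2_gt0 t; lra.
  exists (kcode i c K j t).
  have [e1 e2 e3 e4 e5] := decode_code i c K j t.
  rewrite /outf Hch /expv e2 e3 e4 e5.
  have -> : mchk t (MQ c K j) by apply/mchk_ok.
  rewrite /bdec /eball /= nunpair_npair /= qpos_pow.
  have [_ Hname] := HFQ c Xc.
  have h1 := Hname t.+2.
  have h3 := edist_tri (vdec m (FQ c t.+2)) (f (vdec n c)) (f x).
  have h4 := pow2S t; have h5 := pow2S t.+1; have h6 := pow2S t.+2; have h7 := pow2_gt0 t.
  lra.
- case=> k; rewrite /outf; case Hc: (chk1 n p k); last by [].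
  rewrite /expv; case Hmc: (mchk _ _); last by [].
  rewrite /bdec /eball /= nunpair_npair /= qpos_pow => Hy.
  have Xc := Hchk k Hc.
  have [Hev [Hrho1 Hrho2]] := HMQ (dC k) (dK k) Xc.
  have [_ Hname] := HFQ (dC k) Xc.
  have h1 := Hname (dT k).+2.
  move/mchk_ok: Hmc => Hmc.
  have h2 := Hrho1 (dJ k).
  set c := dC k in Xc Hy Hev Hrho1 Hrho2 Hname h1 Hmc h2 *.
  set K := dK k in Hev Hrho1 Hrho2 Hmc h2 *.
  set t := dT k in Hy h1 Hmc *.
  set a := FQ c t.+2 in Hy h1.
  have E1 : ((edist (f (vdec n c)) y)%:E < Moo X f (vdec n c) K)%E.
    apply: lt_le_trans h2; rewrite lte_fin.
    have h3 := edist_tri (f (vdec n c)) (vdec m a) y.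
    rewrite (edist_sym _ (vdec m a)) in h3.
    have h4 := pow2S t; have h5 := pow2S t.+1; have h6 := pow2_gt0 t.
    lra.
  have [s [s0 Hs Hlt]] := Moo_gt E1.
  have [w [Bw Xw] <-] := Hs y (ltW Hlt).
  exists w => //; exact: (chk1_ball HU Hc).
Qed.

End M10.

Theorem lemma6 (n m : nat) (X : set ('I_n -> R)) (f : ('I_n -> R) -> ('I_m -> R)) :
  re_open X ->
  computable_on X f ->
  open_map_on X f ->
  moo_lower_computable X f ->
  effectively_open X f.
Proof. exact: M10.lemma6'. Qed.
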